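(* Let $s,t\in\mathbb{R}$ with $s\ne0$, $s^2+4t>0$, let $u\in\mathbb{C}$ and let $v$ be a nonzero number. Then the deformed derivative of the deformed $(s,t)$-exponential function satisfies $$\mathbf{D}_{sv,tv^2}\big(\exp_{s,t}(z,u)\big)=\exp_{s,t}(uvz,u)$$ at every point $z$ at which the series defining $\exp_{s,t}(\cdot,u)$ converges at $v\varphi_{s,t}z$ and $v\varphi'_{s,t}z$ (with the value $f'(0)$ at $z=0$).
   Context: $\varphi_{s,t}=\frac{s+\sqrt{s^2+4t}}{2}$, $\varphi'_{s,t}=\frac{s-\sqrt{s^2+4t}}{2}$. Generalized Fibonacci polynomials: $\{0\}_{s,t}=0$, $\{1\}_{s,t}=1$, $\{n+2\}_{s,t}=s\{n+1\}_{s,t}+t\{n\}_{s,t}$; Fibotorial $\{n\}_{s,t}!=\prod_{k=1}^n\{k\}_{s,t}$, $\{0\}_{s,t}!=1$. Deformed exponential: $\exp_{s,t}(z,u)=\sum_{n\ge0}u^{\binom n2}z^n/\{n\}_{s,t}!$ for $u\neq0$ and $\exp_{s,t}(z,0)=1+z$. Deformed $(s,t)$-derivative: $(\mathbf{D}_{sv,tv^2}f)(z)=\frac{f(v\varphi_{s,t}z)-f(v\varphi'_{s,t}z)}{v(\varphi_{s,t}-\varphi'_{s,t})z}$ for $z\neq0$, and $(\mathbf{D}_{sv,tv^2}f)(0)=f'(0)$. *)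

(* Defs.v *)
From Stdlib Require Import Reals.
From Coquelicot Require Import Coquelicot.
Open Scope R_scope.

Definition phi (s t : R) : R := (s + sqrt (s ^ 2 + 4 * t)) / 2.
Definition phi' (s t : R) : R := (s - sqrt (s ^ 2 + 4 * t)) / 2.

Fixpoint fibst (s t : R) (n : nat) : R :=
  match n with
  | O => 0
  | S O => 1
  | S ((S m) as k) => s * fibst s t k + t * fibst s t m
  end.

Fixpoint fibfact (s t : R) (n : nat) : R :=
  match n with
  | O => 1
  | S m => fibst s t (S m) * fibfact s t m
  end.

Definition binom2 (n : nat) : nat := (n * (n - 1) / 2)%nat.

Definition exp_term (s t : R) (u z : Complex.C) (n : nat) : Complex.C :=
  Cdiv (Cmult (Cpow u (binom2 n)) (Cpow z n)) (RtoC (fibfact s t n)).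

(* sum of a complex series (componentwise Series; equals the true sum
   whenever the series converges) *)
Definition CSeries (a : nat -> Complex.C) : Complex.C :=
  (Series (fun n => fst (a n)), Series (fun n => snd (a n))).

Definition exp_st (s t : R) (z u : Complex.C) : Complex.C :=
  match Req_EM_T (fst u) 0, Req_EM_T (snd u) 0 with
  | left _, left _ => Cplus (RtoC 1) z
  | _, _ => CSeries (exp_term s t u z)
  end.

(* "l is the value of (D_{sv,tv^2} f)(z)": the deformed (s,t)-derivative,
   with value f'(0) (complex derivative) at z = 0. *)
Definition is_deformed_deriv (s t : R) (v : Complex.C)
  (f : Complex.C -> Complex.C) (z l : Complex.C) : Prop :=
  (z <> RtoC 0 ->
     l = Cdiv (Cminus (f (Cmult (Cmult v (RtoC (phi s t))) z))
                      (f (Cmult (Cmult v (RtoC (phi' s t))) z)))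
              (Cmult (Cmult v (RtoC (phi s t - phi' s t))) z)) /\
  (z = RtoC 0 -> @is_derive C_AbsRing C_NormedModule f z l).

(* Main.v *)
Require Import Defs.
From Stdlib Require Import Reals Lra Lia Psatz Classical.
From Coquelicot Require Import Coquelicot.
Open Scope R_scope.

Lemma phi_diff s t : 0 < s ^ 2 + 4 * t -> phi s t - phi' s t = sqrt (s^2+4*t).
Proof. intros; unfold phi, phi'; field. Qed.

Lemma phi_diff_pos s t : 0 < s ^ 2 + 4 * t -> 0 < phi s t - phi' s t.
Proof. intros H; rewrite phi_diff by auto; apply sqrt_lt_R0; auto. Qed.

Lemma phi_sq s t : 0 < s ^ 2 + 4 * t -> phi s t ^ 2 = s * phi s t + t.
Proof. intros H. unfold phi.
  assert (Hs := sqrt_sqrt (s^2+4*t) (Rlt_le _ _ H)).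
  field_simplify. nra. Qed.

Lemma phi'_sq s t : 0 < s ^ 2 + 4 * t -> phi' s t ^ 2 = s * phi' s t + t.
Proof. intros H. unfold phi'.
  assert (Hs := sqrt_sqrt (s^2+4*t) (Rlt_le _ _ H)).
  field_simplify. nra. Qed.

Lemma binet s t n : 0 < s ^ 2 + 4 * t ->
  fibst s t n * (phi s t - phi' s t) = phi s t ^ n - phi' s t ^ n.
Proof.
  intros H. assert (H1 := phi_sq s t H). assert (H2 := phi'_sq s t H).
  set (p := phi s t) in *. set (q := phi' s t) in *.
  assert (forall n, fibst s t n * (p - q) = p ^ n - q ^ n /\
                    fibst s t (S n) * (p - q) = p ^ (S n) - q ^ (S n)).
  { induction n0 as [|n0 [IH1 IH2]].
    - simpl. split; ring.
    - split; auto.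
      change (fibst s t (S (S n0))) with (s * fibst s t (S n0) + t * fibst s t n0).
      replace ((s * fibst s t (S n0) + t * fibst s t n0) * (p - q))
        with (s * (fibst s t (S n0) * (p - q)) + t * (fibst s t n0 * (p - q))) by ring.
      rewrite IH1, IH2. simpl. simpl in H1, H2.
      replace (p * (p * p ^ n0)) with ((p*(p*1)) * p^n0) by ring.
      replace (q * (q * q ^ n0)) with ((q*(q*1)) * q^n0) by ring.
      rewrite H1, H2. simpl; ring. }
  apply H0.
Qed.

Lemma pow_lt_l a b n : 0 <= a < b -> (1 <= n)%nat -> a ^ n < b ^ n.
Proof.
  intros [Ha Hab] Hn. induction n. lia.
  destruct n. simpl; lra.
  assert (IH : a ^ S n < b ^ S n) by (apply IHn; lia).
  change (a * a ^ S n < b * b ^ S n).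
  apply Rmult_le_0_lt_compat; auto. apply pow_le; auto.
Qed.

Lemma fibst_nz s t n : s <> 0 -> 0 < s ^ 2 + 4 * t -> (1 <= n)%nat -> fibst s t n <> 0.
Proof.
  intros Hs H Hn E.
  assert (B := binet s t n H). rewrite E, Rmult_0_l in B.
  assert (Hd := phi_diff_pos s t H).
  set (p := phi s t) in *. set (q := phi' s t) in *.
  assert (Hpq: p + q = s) by (unfold p, q, phi, phi'; field).
  assert (Hpn : p ^ n = q ^ n) by lra.
  assert (Ha : Rabs p ^ n = Rabs q ^ n) by (rewrite !RPow_abs, Hpn; auto).
  destruct (Rtotal_order (Rabs p) (Rabs q)) as [Hl|[He|Hg]].
  - assert (Rabs p ^ n < Rabs q ^ n) by (apply pow_lt_l; [split; [apply Rabs_pos|auto]|lia]). lra.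
  - revert He. unfold Rabs. destruct (Rcase_abs p), (Rcase_abs q); lra.
  - assert (Rabs q ^ n < Rabs p ^ n) by (apply pow_lt_l; [split; [apply Rabs_pos|auto]|lia]). lra.
Qed.

Lemma fibfact_nz s t n : s <> 0 -> 0 < s ^ 2 + 4 * t -> fibfact s t n <> 0.
Proof.
  intros Hs H. induction n.
  - simpl; lra.
  - change (fibst s t (S n) * fibfact s t n <> 0).
    apply Rmult_integral_contrapositive; split; auto.
    apply fibst_nz; auto; lia.
Qed.

Lemma binom2_S n : binom2 (S n) = (binom2 n + n)%nat.
Proof.
  unfold binom2. replace (S n * (S n - 1))%nat with (n * (n - 1) + n * 2)%nat.
  - rewrite Nat.div_add by lia. lia.
  - destruct n; simpl; lia.
Qed.

Lemma sum_n_fst (a : nat -> C) n :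
  fst (@sum_n C_AbelianMonoid a n) = sum_n (fun k => fst (a k)) n.
Proof.
  induction n.
  - rewrite !sum_O. reflexivity.
  - rewrite !sum_Sn. rewrite <- IHn. reflexivity.
Qed.

Lemma sum_n_snd (a : nat -> C) n :
  snd (@sum_n C_AbelianMonoid a n) = sum_n (fun k => snd (a k)) n.
Proof.
  induction n.
  - rewrite !sum_O. reflexivity.
  - rewrite !sum_Sn. rewrite <- IHn. reflexivity.
Qed.

Lemma CSeries_correct (a : nat -> C) (l : C) :
  @is_series C_AbsRing C_NormedModule a l -> CSeries a = l.
Proof.
  intros H. unfold CSeries. destruct l as [l1 l2].
  f_equal.
  - apply is_series_unique. unfold is_series.
    apply filterlim_locally. intros eps.
    unfold is_series in H. pose proof (proj1 (@filterlim_locally _ C_UniformSpace _ _ (sum_n a) (l1,l2)) H eps) as H'.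
    eapply filter_imp; [|exact H']. intros n [Hb1 Hb2].
    rewrite <- sum_n_fst. exact Hb1.
  - apply is_series_unique. unfold is_series.
    apply filterlim_locally. intros eps.
    unfold is_series in H. pose proof (proj1 (@filterlim_locally _ C_UniformSpace _ _ (sum_n a) (l1,l2)) H eps) as H'.
    eapply filter_imp; [|exact H']. intros n [Hb1 Hb2].
    rewrite <- sum_n_snd. exact Hb2.
Qed.

Lemma RtoC_nz x : x <> 0 -> RtoC x <> RtoC 0.
Proof. intros H E; apply H; apply RtoC_inj; exact E. Qed.

Lemma key_term s t u v z n : s <> 0 -> 0 < s ^ 2 + 4 * t -> v <> RtoC 0 -> z <> RtoC 0 ->
  exp_term s t u (Cmult (Cmult u v) z) n =
  Cdiv (Cminus (exp_term s t u (Cmult (Cmult v (RtoC (phi s t))) z) (S n))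
               (exp_term s t u (Cmult (Cmult v (RtoC (phi' s t))) z) (S n)))
       (Cmult (Cmult v (RtoC (phi s t - phi' s t))) z).
Proof.
  intros Hs H Hv Hz.
  assert (Hb := binet s t (S n) H).
  assert (Hb' : (RtoC (fibst s t (S n)) * RtoC (phi s t - phi' s t) =
     Cpow (RtoC (phi s t)) (S n) - Cpow (RtoC (phi' s t)) (S n))%C).
  { rewrite <- RtoC_mult, Hb, RtoC_minus, !RtoC_pow. reflexivity. }
  assert (Hd := RtoC_nz _ (Rgt_not_eq _ _ (phi_diff_pos s t H))).
  assert (Hf := RtoC_nz _ (fibfact_nz s t n Hs H)).
  assert (Hf1 := RtoC_nz _ (fibst_nz s t (S n) Hs H ltac:(lia))).
  unfold exp_term. rewrite binom2_S, Cpow_add_r.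
  change (fibfact s t (S n)) with (fibst s t (S n) * fibfact s t n).
  rewrite RtoC_mult.
  rewrite !Cpow_mult_l.
  rewrite RtoC_minus in Hd |- *.
  rewrite RtoC_minus in Hb'.
  set (p := RtoC (phi s t)) in *. set (q := RtoC (phi' s t)) in *.
  set (F1 := RtoC (fibst s t (S n))) in *. set (F := RtoC (fibfact s t n)) in *.
  rewrite !Cpow_S.
  replace (p * p ^ n * (v * v ^ n) * (z * z ^ n) - q * q ^ n * (v * v ^ n) * (z * z ^ n))%C
    with ((p * p ^ n - q * q^n) * (v * v ^ n) * (z * z ^ n))%C by ring.
  rewrite !Cpow_S in Hb'.
  clearbody p q F1 F.
  assert (Eq : (q * q ^ n = p * p ^ n - F1 * (p - q))%C) by (rewrite Hb'; ring).
  rewrite Eq.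
  field. repeat split; auto.
Qed.

Lemma Cminus_plus_aux (x y : C) : x = Cplus (Cminus x y) y.
Proof. ring. Qed.

Lemma aux2 (x y d : C) : Cmult (Cinv d) (Cplus x (Copp y)) = Cdiv (Cminus x y) d.
Proof. unfold Cdiv, Cminus. ring. Qed.

Lemma aux3 (x y w d : C) : Cmult (Cinv d) (Cplus (Cminus x w) (Copp (Cminus y w))) = Cdiv (Cminus x y) d.
Proof. unfold Cdiv, Cminus. ring. Qed.

Lemma key_series s t u v z : s <> 0 -> 0 < s ^ 2 + 4 * t -> v <> RtoC 0 -> z <> RtoC 0 ->
  @ex_series C_AbsRing C_NormedModule
      (exp_term s t u (Cmult (Cmult v (RtoC (phi s t))) z)) ->
  @ex_series C_AbsRing C_NormedModule
      (exp_term s t u (Cmult (Cmult v (RtoC (phi' s t))) z)) ->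
  CSeries (exp_term s t u (Cmult (Cmult u v) z)) =
  Cdiv (Cminus (CSeries (exp_term s t u (Cmult (Cmult v (RtoC (phi s t))) z)))
               (CSeries (exp_term s t u (Cmult (Cmult v (RtoC (phi' s t))) z))))
       (Cmult (Cmult v (RtoC (phi s t - phi' s t))) z).
Proof.
  intros Hs H Hv Hz [la Ha] [lb Hb].
  set (a := exp_term s t u (Cmult (Cmult v (RtoC (phi s t))) z)) in *.
  set (b := exp_term s t u (Cmult (Cmult v (RtoC (phi' s t))) z)) in *.
  set (D := Cmult (Cmult v (RtoC (phi s t - phi' s t))) z).
  assert (Hab0 : a 0%nat = b 0%nat) by reflexivity.
  assert (Ha1 : @is_series C_AbsRing C_NormedModule (fun n => a (S n)) (Cminus la (a 0%nat))).
  { apply is_series_incr_1.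
    match goal with |- is_series _ ?l => replace l with la; [exact Ha|] end.
    apply Cminus_plus_aux. }
  assert (Hb1 : @is_series C_AbsRing C_NormedModule (fun n => b (S n)) (Cminus lb (b 0%nat))).
  { apply is_series_incr_1.
    match goal with |- is_series _ ?l => replace l with lb; [exact Hb|] end.
    apply Cminus_plus_aux. }
  assert (Hm := is_series_minus _ _ _ _ Ha1 Hb1).
  assert (Hsc := @is_series_scal_l C_AbsRing C_NormedModule (Cinv D) _ _ Hm).
  assert (Hr : @is_series C_AbsRing C_NormedModule (exp_term s t u (Cmult (Cmult u v) z))
     (Cdiv (Cminus la lb) D)).
  { match type of Hsc with is_series _ ?l => replace (Cdiv (Cminus la lb) D) with l end.
    - eapply is_series_ext; [|exact Hsc].
      intros n. simpl.
      rewrite (key_term s t u v z n Hs H Hv Hz). fold a b D.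
      apply aux2.
    - change (Cmult (Cinv D) (Cplus (Cminus la (a 0%nat)) (Copp (Cminus lb (b 0%nat)))) =
              Cdiv (Cminus la lb) D).
      rewrite Hab0. apply aux3. }
  rewrite (CSeries_correct _ _ Hr), (CSeries_correct _ _ Ha), (CSeries_correct _ _ Hb).
  reflexivity.
Qed.

Lemma Series_unbounded (x : nat -> R) :
  (forall (N : nat) (M : R), exists n, (N <= n)%nat /\ M < Rabs (x n)) -> Series x = 0.
Proof.
  intros Hx.
  set (Sx := sum_n x).
  assert (HS : forall (N : nat) (M : R), exists n, (N <= n)%nat /\ M < Rabs (Sx n)).
  { intros N M. destruct (Hx (S N) (2 * M)) as [n [Hn HM]].
    destruct n as [|n]; [lia|].
    assert (E : x (S n) = Sx (S n) - Sx n).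
    { unfold Sx. rewrite sum_Sn. change (plus (sum_n x n) (x (S n))) with (sum_n x n + x (S n)). ring. }
    rewrite E in HM.
    assert (Habs := Rabs_triang (Sx (S n)) (- Sx n)). rewrite Rabs_Ropp in Habs.
    destruct (Rlt_dec M (Rabs (Sx (S n)))).
    - exists (S n); split; [lia|auto].
    - exists n; split; [lia|].
      unfold Rminus in HM. lra. }
  unfold Series, Lim_seq. fold Sx.
  unfold LimSup_seq, LimInf_seq.
  destruct (ex_LimSup_seq Sx) as [ls Hls]. destruct (ex_LimInf_seq Sx) as [li Hli].
  simpl.
  destruct ls as [ls| |]; destruct li as [li| |]; simpl; try lra.
  exfalso.
  destruct (proj2 (Hls (mkposreal 1 Rlt_0_1))) as [N1 H1].
  destruct (proj2 (Hli (mkposreal 1 Rlt_0_1))) as [N2 H2].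
  simpl in H1, H2.
  destruct (HS (Nat.max N1 N2) (Rabs ls + Rabs li + 2)) as [n [Hn Hb]].
  specialize (H1 n ltac:(lia)). specialize (H2 n ltac:(lia)).
  revert Hb H1 H2. unfold Rabs. destruct (Rcase_abs (Sx n)), (Rcase_abs ls), (Rcase_abs li); lra.
Qed.

Lemma aux_m0 (h : C) : Cplus h (Copp (RtoC 0)) = h.
Proof. ring. Qed.

Lemma deriv_eps (f : C -> C) (l : C) :
  @is_derive C_AbsRing C_NormedModule f (RtoC 0) l ->
  forall eps, 0 < eps -> exists d, 0 < d /\ forall h, Cmod h < d ->
    Cmod (Cminus (Cminus (f h) (f (RtoC 0))) (Cmult h l)) <= eps * Cmod h.
Proof.
  intros [_ Hd] eps Heps.
  destruct (Hd (RtoC 0) (fun P HP => HP) (mkposreal eps Heps)) as [d Hdd].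
  exists d. split; [apply cond_pos|].
  intros h Hh.
  assert (Hb : @ball (AbsRing_UniformSpace C_AbsRing) (RtoC 0) d h).
  { change (Cmod (Cplus h (Copp (RtoC 0))) < d).
    rewrite aux_m0. exact Hh. }
  specialize (Hdd h Hb). simpl in Hdd.
  change (Cmod (Cplus (Cplus (f h) (Copp (f (RtoC 0)))) (Copp (Cmult (Cplus h (Copp (RtoC 0))) l)))
     <= eps * Cmod (Cplus h (Copp (RtoC 0)))) in Hdd.
  rewrite !aux_m0 in Hdd. exact Hdd.
Qed.

Definition cc (s t : R) (u : C) (n : nat) : C :=
  Cdiv (Cpow u (binom2 n)) (RtoC (fibfact s t n)).

Lemma exp_term_c s t u w n : exp_term s t u w n = Cmult (cc s t u n) (Cpow w n).
Proof. unfold exp_term, cc, Cdiv. ring. Qed.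

Lemma Cmod_term s t u w n : Cmod (exp_term s t u w n) = Cmod (cc s t u n) * Cmod w ^ n.
Proof. rewrite exp_term_c, Cmod_mult, Cmod_pow. reflexivity. Qed.

Lemma cc_S s t u n : s <> 0 -> 0 < s ^ 2 + 4 * t ->
  Cmod (cc s t u (S n)) * Rabs (fibst s t (S n)) = Cmod (cc s t u n) * Cmod u ^ n.
Proof.
  intros Hs H.
  assert (Hf := RtoC_nz _ (fibfact_nz s t n Hs H)).
  assert (Hf1 := RtoC_nz _ (fibst_nz s t (S n) Hs H ltac:(lia))).
  assert (E : Cmult (cc s t u (S n)) (RtoC (fibst s t (S n))) = Cmult (cc s t u n) (Cpow u n)).
  { unfold cc. rewrite binom2_S, Cpow_add_r.
    change (fibfact s t (S n)) with (fibst s t (S n) * fibfact s t n).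
    rewrite RtoC_mult. field. split; auto. }
  rewrite <- Cmod_R, <- Cmod_pow, <- !Cmod_mult, E. reflexivity.
Qed.

Lemma fib_bound s t K : 1 <= K -> Rabs s + Rabs t <= K -> forall n, Rabs (fibst s t n) <= K ^ n.
Proof.
  intros HK1 HK.
  assert (forall n, Rabs (fibst s t n) <= K ^ n /\ Rabs (fibst s t (S n)) <= K ^ S n).
  { induction n as [|n [IH1 IH2]].
    - simpl. rewrite Rabs_R0, Rabs_R1. lra.
    - split; auto.
      change (fibst s t (S (S n))) with (s * fibst s t (S n) + t * fibst s t n).
      eapply Rle_trans; [apply Rabs_triang|]. rewrite !Rabs_mult.
      assert (HKn : K ^ n <= K ^ S n).
      { simpl. assert (0 <= K ^ n) by (apply pow_le; lra). nra. }
      assert (0 <= Rabs s) by apply Rabs_pos. assert (0 <= Rabs t) by apply Rabs_pos.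
      assert (Rabs s * Rabs (fibst s t (S n)) <= Rabs s * K ^ S n) by (apply Rmult_le_compat_l; auto).
      assert (Rabs t * Rabs (fibst s t n) <= Rabs t * K ^ S n) by (apply Rmult_le_compat_l; lra).
      assert (0 <= K ^ S n) by (apply pow_le; lra).
      change (K ^ S (S n)) with (K * K ^ S n). nra. }
  intros n; apply H.
Qed.

Lemma case1_bound s t u r' N M : s <> 0 -> 0 < s ^ 2 + 4 * t -> u <> RtoC 0 -> 0 < r' ->
  (forall n, (N <= n)%nat -> Nat.Odd n -> Cmod (cc s t u n) * r' ^ n <= M) ->
  exists rho M', 0 < rho /\ forall n, (N <= n)%nat -> Cmod (cc s t u n) * rho ^ n <= M'.
Proof.
  intros Hs H Hu Hr HM.
  assert (Hu0 : 0 < Cmod u) by (apply Cmod_gt_0; exact Hu).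
  set (K := 1 + Rabs s + Rabs t + Cmod u).
  assert (HK1 : 1 <= K) by (unfold K; assert (0 <= Rabs s) by apply Rabs_pos; assert (0 <= Rabs t) by apply Rabs_pos; lra).
  assert (HK2 : Rabs s + Rabs t <= K) by (unfold K; lra).
  assert (HK3 : Cmod u <= K) by (unfold K; assert (0 <= Rabs s) by apply Rabs_pos; assert (0 <= Rabs t) by apply Rabs_pos; lra).
  exists (r' * Cmod u / K), (Rabs M + Rabs M * K / r').
  split. { apply Rdiv_lt_0_compat; [nra|lra]. }
  intros n Hn.
  assert (HMa : 0 <= Rabs M * K / r') by (apply Rdiv_le_0_compat; [apply Rmult_le_pos; [apply Rabs_pos|lra]|lra]).
  assert (HMb := Rle_abs M).
  assert (Hc0 := Cmod_ge_0 (cc s t u n)).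
  destruct (Nat.Even_or_Odd n) as [[m Hm]|Ho].
  - (* even: use n+1 *)
    assert (Ho1 : Nat.Odd (S n)) by (exists m; lia).
    specialize (HM (S n) ltac:(lia) Ho1).
    assert (Hc := cc_S s t u n Hs H).
    assert (Hfb := fib_bound s t K HK1 HK2 (S n)).
    assert (Hc1 := Cmod_ge_0 (cc s t u (S n))).
    set (X := Cmod (cc s t u n)) in *. set (Y := Cmod (cc s t u (S n))) in *.
    set (F := Rabs (fibst s t (S n))) in *.
    replace ((r' * Cmod u / K) ^ n) with (r' ^ n * Cmod u ^ n * / K ^ n).
    2:{ unfold Rdiv. rewrite !Rpow_mult_distr, pow_inv. reflexivity. }
    assert (HKn : 0 < K ^ n) by (apply pow_lt; lra).
    assert (Hrn : 0 < r' ^ n) by (apply pow_lt; lra).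
    replace (X * (r' ^ n * Cmod u ^ n * / K ^ n)) with ((X * Cmod u ^ n) * r' ^ n / K ^ n) by (field; lra).
    rewrite <- Hc.
    assert (Y * F <= Y * K ^ S n) by (apply Rmult_le_compat_l; auto).
    assert (Y * F * r' ^ n / K ^ n <= Y * K ^ S n * r' ^ n / K ^ n).
    { unfold Rdiv. apply Rmult_le_compat_r. left; apply Rinv_0_lt_compat; auto.
      apply Rmult_le_compat_r; lra. }
    replace (Y * K ^ S n * r' ^ n / K ^ n) with ((Y * r' ^ S n) * K / r') in H1.
    2:{ simpl. field. split; lra. }
    assert ((Y * r' ^ S n) * K / r' <= Rabs M * K / r').
    { unfold Rdiv. apply Rmult_le_compat_r. left; apply Rinv_0_lt_compat; auto.
      apply Rmult_le_compat_r; lra. }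
    assert (0 <= Rabs M) by apply Rabs_pos.
    lra.
  - specialize (HM n Hn Ho).
    assert (Cmod (cc s t u n) * (r' * Cmod u / K) ^ n <= Cmod (cc s t u n) * r' ^ n).
    { apply Rmult_le_compat_l; auto. apply pow_incr. split.
      - apply Rdiv_le_0_compat; nra.
      - apply (Rmult_le_reg_r K); [lra|]. unfold Rdiv. rewrite Rmult_assoc, Rinv_l by lra. nra. }
    lra.
Qed.

Lemma case1_conv s t u rho M' N : 0 < rho ->
  (forall n, (N <= n)%nat -> Cmod (cc s t u n) * rho ^ n <= M') ->
  forall h, Cmod h <= rho / 2 -> @ex_series C_AbsRing C_NormedModule (exp_term s t u h).
Proof.
  intros Hr HM h Hh.
  apply (proj2 (ex_series_incr_n _ N)).
  apply (@ex_series_le C_AbsRing C_CompleteNormedModule _ (fun k => Rabs M' * (1/2) ^ k)).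
  - intros k. change (Cmod (exp_term s t u h (N + k)%nat) <= Rabs M' * (1/2) ^ k).
    rewrite Cmod_term.
    assert (Hc0 := Cmod_ge_0 (cc s t u (N + k))).
    assert (Hh0 := Cmod_ge_0 h).
    assert (E1 : Cmod (cc s t u (N + k)) * Cmod h ^ (N + k) <= Cmod (cc s t u (N + k)) * (rho/2) ^ (N + k)).
    { apply Rmult_le_compat_l; auto. apply pow_incr; lra. }
    replace ((rho/2) ^ (N + k)) with (rho ^ (N + k) * (1/2) ^ (N + k)) in E1
      by (rewrite <- Rpow_mult_distr; f_equal; field).
    assert (E2 := HM (N + k)%nat ltac:(lia)).
    assert (E3 : (1/2) ^ (N + k) <= (1/2) ^ k).
    { rewrite pow_add. assert (0 < (1/2) ^ k) by (apply pow_lt; lra).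
      assert ((1/2) ^ N <= 1).
      { assert (Hq : (1/2) ^ N <= 1 ^ N) by (apply pow_incr; split; lra). rewrite pow1 in Hq; exact Hq. }
      assert (0 <= (1/2) ^ N) by (apply pow_le; lra). nra. }
    assert (0 < (1/2) ^ (N + k)) by (apply pow_lt; lra).
    assert (HMa := Rle_abs M').
    assert (0 <= Cmod (cc s t u (N + k)) * rho ^ (N + k)) by (apply Rmult_le_pos; auto; apply pow_le; lra).
    nra.
  - apply (ex_series_ext (fun k => scal (Rabs M') ((1/2) ^ k))).
    + intros k. reflexivity.
    + apply (@ex_series_scal_l R_AbsRing R_NormedModule (Rabs M') (fun k => (1/2) ^ k)). apply ex_series_geom. rewrite Rabs_pos_eq; lra.
Qed.

Lemma Cmod_le_re_im (x : C) : Cmod x <= Rabs (fst x) + Rabs (snd x).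
Proof.
  unfold Cmod. destruct x as [a b]. simpl.
  rewrite <- (sqrt_pow2 (Rabs a + Rabs b)) by (assert (0 <= Rabs a) by apply Rabs_pos; assert (0 <= Rabs b) by apply Rabs_pos; lra).
  apply sqrt_le_1.
  - nra.
  - apply pow_le. assert (0 <= Rabs a) by apply Rabs_pos; assert (0 <= Rabs b) by apply Rabs_pos; lra.
  - assert (0 <= Rabs a) by apply Rabs_pos; assert (0 <= Rabs b) by apply Rabs_pos.
    assert (Rabs a * Rabs a = a * a) by (rewrite <- Rabs_mult; apply Rabs_pos_eq; nra).
    assert (Rabs b * Rabs b = b * b) by (rewrite <- Rabs_mult; apply Rabs_pos_eq; nra).
    nra.
Qed.

Lemma Ci_pow_odd m : Cpow Ci (2 * m + 1) = (0, (-1) ^ m).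
Proof.
  induction m.
  - simpl. unfold Ci. apply injective_projections; simpl; ring.
  - replace (2 * S m + 1)%nat with (S (S (2 * m + 1))) by lia.
    rewrite !Cpow_S, IHm. unfold Ci. apply injective_projections; simpl; ring.
Qed.

Lemma rot_odd s t u r n : Nat.Odd n ->
  Rabs (fst (exp_term s t u (Cmult Ci (RtoC r)) n)) = Rabs (snd (exp_term s t u (RtoC r) n)).
Proof.
  intros [m Hm].
  rewrite !exp_term_c, Cpow_mult_l, Hm, Ci_pow_odd.
  destruct (Cmult (cc s t u (2 * m + 1)) (Cpow (RtoC r) (2 * m + 1))) as [a b] eqn:E.
  replace (Cmult (cc s t u (2 * m + 1)) (Cmult (0, (-1) ^ m) (Cpow (RtoC r) (2 * m + 1))))
    with (Cmult (Cmult (cc s t u (2 * m + 1)) (Cpow (RtoC r) (2 * m + 1))) (0, (-1) ^ m)) by ring.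
  rewrite E. simpl.
  replace (a * 0 - b * (-1) ^ m) with (- (b * (-1) ^ m)) by ring.
  rewrite Rabs_Ropp, Rabs_mult, pow_1_abs. ring.
Qed.

Lemma neg_unb (x : nat -> R) :
  ~ (forall (N : nat) (M : R), exists n, (N <= n)%nat /\ M < Rabs (x n)) ->
  exists N M, forall n, (N <= n)%nat -> Rabs (x n) <= M.
Proof.
  intros HP. apply NNPP. intros HC. apply HP. intros N M.
  apply NNPP. intros HC2. apply HC. exists N, M. intros n Hn.
  apply Rnot_lt_le. intros Hlt. apply HC2. exists n. auto.
Qed.

Lemma case2 s t u l' :
  @is_derive C_AbsRing C_NormedModule (fun w => CSeries (exp_term s t u w)) (RtoC 0) l' ->
  CSeries (exp_term s t u (RtoC 0)) = RtoC 1 ->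
  (forall r', 0 < r' -> forall (N : nat) (M : R), exists n, (N <= n)%nat /\ Nat.Odd n /\
      M < Cmod (cc s t u n) * r' ^ n) -> False.
Proof.
  intros Hd H0 Hg.
  set (g := fun w => CSeries (exp_term s t u w)) in *.
  destruct (deriv_eps g l' Hd 1 Rlt_0_1) as [d [Hd0 Hdd]].
  set (L := Cmod l').
  assert (HL : 0 <= L) by apply Cmod_ge_0.
  set (r' := Rmin (d/2) (1/(4*(1+L)))).
  assert (Hr1 : r' <= d/2) by apply Rmin_l.
  assert (Hr2 : r' <= 1/(4*(1+L))) by apply Rmin_r.
  assert (Hr0 : 0 < r').
  { apply Rmin_pos. lra. apply Rdiv_lt_0_compat; lra. }
  assert (Hr3 : r' * (1 + L) <= 1/4).
  { apply (Rmult_le_compat_r (1+L)) in Hr2; [|lra].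
    replace (1 / (4 * (1 + L)) * (1 + L)) with (1/4) in Hr2 by (field; lra). exact Hr2. }
  assert (Hnz : forall h, Cmod h = r' -> Series (fun n => fst (exp_term s t u h n)) <> 0).
  { intros h Hh.
    specialize (Hdd h ltac:(lra)).
    change (g (RtoC 0)) with (CSeries (exp_term s t u (RtoC 0))) in Hdd. rewrite H0 in Hdd.
    assert (E : Cminus (g h) (RtoC 1) = Cplus (Cminus (Cminus (g h) (RtoC 1)) (Cmult h l')) (Cmult h l')) by ring.
    assert (Hb : Cmod (Cminus (g h) (RtoC 1)) <= r' * (1 + L)).
    { rewrite E. eapply Rle_trans; [apply Cmod_triangle|]. rewrite Cmod_mult. fold L. rewrite Hh in Hdd |- *. lra. }
    assert (Hre : Rabs (Series (fun n => fst (exp_term s t u h n)) - 1) <= Cmod (Cminus (g h) (RtoC 1)))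
      by exact (re_le_Cmod (Cminus (g h) (RtoC 1))).
    intros HS. rewrite HS in Hre.
    replace (Rabs (0 - 1)) with 1 in Hre by (rewrite Rabs_left; lra).
    lra. }
  set (h1 := RtoC r'). set (h2 := Cmult Ci (RtoC r')).
  assert (Hh1 : Cmod h1 = r') by (unfold h1; rewrite Cmod_R; apply Rabs_pos_eq; lra).
  assert (Hh2 : Cmod h2 = r') by (unfold h2; rewrite Cmod_mult, Cmod_Ci, Cmod_R, Rabs_pos_eq; lra).
  destruct (classic (forall (N : nat) (M : R), exists n, (N <= n)%nat /\ M < Rabs (fst (exp_term s t u h1 n)))) as [P1|P1].
  { apply (Hnz h1 Hh1). apply Series_unbounded. exact P1. }
  destruct (classic (forall (N : nat) (M : R), exists n, (N <= n)%nat /\ M < Rabs (fst (exp_term s t u h2 n)))) as [P2|P2].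
  { apply (Hnz h2 Hh2). apply Series_unbounded. exact P2. }
  destruct (neg_unb _ P1) as [N1 [M1 HM1]].
  destruct (neg_unb _ P2) as [N2 [M2 HM2]].
  destruct (Hg r' Hr0 (Nat.max N1 N2) (M1 + M2)) as [n [Hn [Ho Hlt]]].
  specialize (HM1 n ltac:(lia)). specialize (HM2 n ltac:(lia)).
  unfold h2 in HM2. rewrite (rot_odd s t u r' n Ho) in HM2.
  assert (Hc := Cmod_le_re_im (exp_term s t u h1 n)).
  rewrite Cmod_term, Hh1 in Hc. unfold h1 in HM1, Hc. lra.
Qed.

Lemma Cmod_minus_le (x y : C) : Cmod (Cminus x y) <= Cmod x + Cmod y.
Proof.
  replace (Cminus x y) with (Cplus x (Copp y)) by ring.
  rewrite <- (Cmod_opp y). apply Cmod_triangle.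
Qed.

Lemma aux_alg (ga gb gc l a b c D : C) : D <> RtoC 0 -> gc = Cdiv (Cminus ga gb) D -> D = Cminus a b ->
  Cminus (RtoC 1) l = Cminus (Cminus (Cdiv (Cminus (Cminus (Cminus ga (RtoC 1)) (Cmult a l))
                                         (Cminus (Cminus gb (RtoC 1)) (Cmult b l))) D)
                               (Cminus (Cminus gc (RtoC 1)) (Cmult c l))) (Cmult c l).
Proof. intros HD Hgc HDe. rewrite Hgc. rewrite HDe in HD |- *. field. exact HD. Qed.

Lemma aux_eq (x y : C) : Cminus x y = RtoC 0 -> y = x.
Proof. intros E. replace y with (Cminus x (Cminus x y)) by ring. rewrite E. ring. Qed.

Lemma small_zero (x K : R) : 0 <= x -> 0 <= K -> (forall eps, 0 < eps -> x <= eps * K) -> x = 0.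
Proof.
  intros Hx HK H. destruct (Rle_lt_or_eq_dec 0 x Hx) as [Hlt|]; [|auto].
  exfalso. specialize (H (x / (2 * (K + 1))) ltac:(apply Rdiv_lt_0_compat; lra)).
  assert (x / (2 * (K + 1)) * K < x).
  { apply (Rmult_lt_reg_r (2 * (K+1))); [lra|].
    replace (x / (2 * (K + 1)) * K * (2 * (K + 1))) with (x * K) by (field; lra). nra. }
  lra.
Qed.

Lemma case1_lim s t u v l' r : s <> 0 -> 0 < s ^ 2 + 4 * t -> v <> RtoC 0 -> 0 < r ->
  (forall h, Cmod h <= r -> @ex_series C_AbsRing C_NormedModule (exp_term s t u h)) ->
  @is_derive C_AbsRing C_NormedModule (fun w => CSeries (exp_term s t u w)) (RtoC 0) l' ->
  CSeries (exp_term s t u (RtoC 0)) = RtoC 1 -> l' = RtoC 1.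
Proof.
  intros Hs H Hv Hr Hconv Hd H0.
  set (g := fun w => CSeries (exp_term s t u w)) in *.
  assert (Hpq := phi_diff_pos s t H).
  set (p := phi s t) in *. set (q := phi' s t) in *.
  set (C0 := (Rabs p + Rabs q) / (p - q)).
  assert (HC0 : 0 <= C0) by (apply Rdiv_le_0_compat; [assert (0 <= Rabs p) by apply Rabs_pos; assert (0 <= Rabs q) by apply Rabs_pos; lra | lra]).
  set (L := Cmod l'). assert (HL : 0 <= L) by apply Cmod_ge_0.
  set (V := Cmod v). assert (HV : 0 < V) by (apply Cmod_gt_0; exact Hv).
  set (U := Cmod u). assert (HU : 0 <= U) by apply Cmod_ge_0.
  set (P := Rabs p + Rabs q + 1).
  assert (Hp : Rabs p <= P) by (unfold P; assert (0 <= Rabs q) by apply Rabs_pos; lra).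
  assert (Hq : Rabs q <= P) by (unfold P; assert (0 <= Rabs p) by apply Rabs_pos; lra).
  assert (HP : 1 <= P) by (unfold P; assert (0 <= Rabs p) by apply Rabs_pos; assert (0 <= Rabs q) by apply Rabs_pos; lra).
  assert (Hfin : Cmod (Cminus (RtoC 1) l') = 0).
  2:{ apply Cmod_eq_0 in Hfin. exact (aux_eq _ _ Hfin). }
  apply (small_zero _ (C0 + 1)); [apply Cmod_ge_0|lra|].
  intros eps Heps.
  destruct (deriv_eps g l' Hd eps Heps) as [d [Hd0 Hdd]].
  change (g (RtoC 0)) with (CSeries (exp_term s t u (RtoC 0))) in Hdd. rewrite H0 in Hdd.
  set (mu := Rmin (Rmin (d/2) r) (eps / (L + eps))).
  assert (Hmu1 : mu <= d/2) by (unfold mu; eapply Rle_trans; [apply Rmin_l|apply Rmin_l]).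
  assert (Hmu2 : mu <= r) by (unfold mu; eapply Rle_trans; [apply Rmin_l|apply Rmin_r]).
  assert (Hmu3 : mu <= eps / (L + eps)) by (unfold mu; apply Rmin_r).
  assert (Hmu0 : 0 < mu) by (unfold mu; repeat apply Rmin_pos; try lra; apply Rdiv_lt_0_compat; lra).
  set (zeta := mu / (V * P * (U + 1))).
  assert (Hz0 : 0 < zeta) by (unfold zeta; apply Rdiv_lt_0_compat; [lra| apply Rmult_lt_0_compat; [nra|lra]]).
  set (z := RtoC zeta).
  assert (Hz : z <> RtoC 0) by (apply RtoC_nz; lra).
  assert (Hzm : Cmod z = zeta) by (unfold z; rewrite Cmod_R; apply Rabs_pos_eq; lra).
  set (a := Cmult (Cmult v (RtoC p)) z).
  set (b := Cmult (Cmult v (RtoC q)) z).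
  set (c := Cmult (Cmult u v) z).
  set (D := Cmult (Cmult v (RtoC (p - q))) z).
  assert (Ha : Cmod a = V * Rabs p * zeta) by (unfold a; rewrite !Cmod_mult, Cmod_R, Hzm; reflexivity).
  assert (Hb : Cmod b = V * Rabs q * zeta) by (unfold b; rewrite !Cmod_mult, Cmod_R, Hzm; reflexivity).
  assert (Hc : Cmod c = U * V * zeta) by (unfold c; rewrite !Cmod_mult, Hzm; reflexivity).
  assert (HDm : Cmod D = V * (p - q) * zeta) by (unfold D; rewrite !Cmod_mult, Cmod_R, Hzm, Rabs_pos_eq by lra; reflexivity).
  assert (Hsm : forall X, 0 <= X -> X <= P * (U + 1) -> V * X * zeta <= mu).
  { intros X HX HXP. unfold zeta.
    replace (V * X * (mu / (V * P * (U + 1)))) with (mu * (X / (P * (U + 1)))) by (field; split; nra).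
    assert (X / (P * (U + 1)) <= 1).
    { apply (Rmult_le_reg_r (P * (U + 1))); [nra|]. unfold Rdiv. rewrite Rmult_assoc, Rinv_l by nra. lra. }
    assert (0 <= X / (P * (U + 1))) by (apply Rdiv_le_0_compat; nra).
    nra. }
  assert (Ha' : Cmod a <= mu) by (rewrite Ha; apply Hsm; [apply Rabs_pos| nra]).
  assert (Hb' : Cmod b <= mu) by (rewrite Hb; apply Hsm; [apply Rabs_pos| nra]).
  assert (Hc' : Cmod c <= mu).
  { rewrite Hc. replace (U * V * zeta) with (V * U * zeta) by ring. apply Hsm; [auto| nra]. }
  assert (Hexa : @ex_series C_AbsRing C_NormedModule (exp_term s t u a)) by (apply Hconv; lra).
  assert (Hexb : @ex_series C_AbsRing C_NormedModule (exp_term s t u b)) by (apply Hconv; lra).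
  assert (Hkey := key_series s t u v z Hs H Hv Hz Hexa Hexb).
  fold p q a b c D in Hkey.
  assert (HD0 : D <> RtoC 0).
  { intros E. apply (f_equal Cmod) in E. rewrite HDm, Cmod_R, Rabs_R0 in E.
    assert (0 < V * (p - q) * zeta) by (apply Rmult_lt_0_compat; [nra|lra]). lra. }
  assert (HDe : D = Cminus a b) by (unfold D, a, b; rewrite RtoC_minus; ring).
  rewrite (aux_alg (g a) (g b) (g c) l' a b c D HD0 Hkey HDe).
  assert (Ea := Hdd a ltac:(lra)). assert (Eb := Hdd b ltac:(lra)). assert (Ec := Hdd c ltac:(lra)).
  fold (g a) (g b) (g c) in Ea, Eb, Ec.
  set (EA := Cminus (Cminus (g a) (RtoC 1)) (Cmult a l')) in *.
  set (EB := Cminus (Cminus (g b) (RtoC 1)) (Cmult b l')) in *.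
  set (EC := Cminus (Cminus (g c) (RtoC 1)) (Cmult c l')) in *.
  eapply Rle_trans; [apply Cmod_minus_le|].
  eapply Rle_trans; [apply Rplus_le_compat_r; apply Cmod_minus_le|].
  rewrite Cmod_div by exact HD0. rewrite Cmod_mult. fold L.
  assert (E1 : Cmod (Cminus EA EB) / Cmod D <= eps * C0).
  { rewrite HDm. apply (Rmult_le_reg_r (V * (p - q) * zeta)); [apply Rmult_lt_0_compat; [nra|lra]|].
    unfold Rdiv. rewrite Rmult_assoc, Rinv_l by (apply Rgt_not_eq; apply Rmult_lt_0_compat; [nra|lra]).
    rewrite Rmult_1_r.
    eapply Rle_trans; [apply Cmod_minus_le|].
    unfold C0. replace (eps * ((Rabs p + Rabs q) / (p - q)) * (V * (p - q) * zeta))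
      with (eps * (V * Rabs p * zeta) + eps * (V * Rabs q * zeta)) by (field; lra).
    rewrite <- Ha, <- Hb. lra. }
  assert (E2 : Cmod EC + Cmod c * L <= eps).
  { assert (Cmod c * (eps + L) <= eps).
    { assert (Cmod c * (eps + L) <= mu * (eps + L)) by (apply Rmult_le_compat_r; lra).
      assert (mu * (eps + L) <= eps).
      { apply (Rmult_le_compat_r (eps + L)) in Hmu3; [|lra].
        replace (eps / (L + eps) * (eps + L)) with eps in Hmu3 by (field; lra). exact Hmu3. }
      lra. }
    lra. }
  lra.
Qed.

Lemma exp_term_0 s t u n : exp_term s t u (RtoC 0) n = match n with O => RtoC 1 | S _ => RtoC 0 end.
Proof.
  destruct n.
  - unfold exp_term. simpl. unfold Cdiv. 
    replace (Cinv (RtoC 1)) with (RtoC 1) by (rewrite <- RtoC_inv by lra; f_equal; field).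
    ring.
  - unfold exp_term. rewrite Cpow_S. unfold Cdiv. ring.
Qed.

Lemma CSeries_0 s t u : CSeries (exp_term s t u (RtoC 0)) = RtoC 1.
Proof.
  apply CSeries_correct. unfold is_series.
  apply (filterlim_ext (fun _ => RtoC 1)); [|apply filterlim_const].
  intros n. induction n.
  - rewrite sum_O, exp_term_0. reflexivity.
  - rewrite sum_Sn, <- IHn, exp_term_0. change (RtoC 1 = Cplus (RtoC 1) (RtoC 0)). ring.
Qed.

Lemma Cmult_0_aux (x : C) : Cmult x (RtoC 0) = RtoC 0.
Proof. ring. Qed.

Lemma main_nonzero s t u v z : s <> 0 -> 0 < s ^ 2 + 4 * t -> v <> RtoC 0 -> u <> RtoC 0 ->
  @ex_series C_AbsRing C_NormedModule
      (exp_term s t u (Cmult (Cmult v (RtoC (phi s t))) z)) ->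
  @ex_series C_AbsRing C_NormedModule
      (exp_term s t u (Cmult (Cmult v (RtoC (phi' s t))) z)) ->
  (z = RtoC 0 -> @ex_derive C_AbsRing C_NormedModule (fun w => CSeries (exp_term s t u w)) z) ->
  (z <> RtoC 0 -> CSeries (exp_term s t u (Cmult (Cmult u v) z)) =
    Cdiv (Cminus (CSeries (exp_term s t u (Cmult (Cmult v (RtoC (phi s t))) z)))
                 (CSeries (exp_term s t u (Cmult (Cmult v (RtoC (phi' s t))) z))))
         (Cmult (Cmult v (RtoC (phi s t - phi' s t))) z)) /\
  (z = RtoC 0 -> @is_derive C_AbsRing C_NormedModule (fun w => CSeries (exp_term s t u w)) z
      (CSeries (exp_term s t u (Cmult (Cmult u v) z)))).
Proof.
  intros Hs H Hv Hu Ha Hb Hder. split.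
  - intros Hz. apply key_series; auto.
  - intros Hz. specialize (Hder Hz). subst z.
    rewrite Cmult_0_aux, CSeries_0.
    destruct Hder as [l' Hl'].
    assert (E : l' = RtoC 1).
    { destruct (classic (exists r', 0 < r' /\ exists (N : nat) (M : R), forall n, (N <= n)%nat -> Nat.Odd n ->
          Cmod (cc s t u n) * r' ^ n <= M)) as [[r' [Hr' [N [M HM]]]]|Hn].
      - destruct (case1_bound s t u r' N M Hs H Hu Hr' HM) as [rho [M' [Hrho HM']]].
        apply (case1_lim s t u v l' (rho / 2) Hs H Hv ltac:(lra)); auto.
        + intros h Hh. apply (case1_conv s t u rho M' N Hrho HM' h Hh).
        + apply CSeries_0.
      - exfalso. apply (case2 s t u l' Hl' (CSeries_0 s t u)).
        intros r' Hr' N M. apply NNPP. intros HC. apply Hn. exists r'. split; auto.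
        exists N, M. intros n Hn1 Ho. apply Rnot_lt_le. intros Hlt. apply HC. exists n. auto. }
    rewrite <- E. exact Hl'.
Qed.

Lemma aux_zero (x y v : C) : Cplus (Cplus (Cplus (RtoC 1) y) (Copp (Cplus (RtoC 1) x)))
                (Copp (Cmult (Cplus y (Copp x)) (Cplus (RtoC 1) (Cmult (Cmult (RtoC 0) v) (RtoC 0))))) = RtoC 0.
Proof. ring. Qed.

Theorem mainTheorem8 (s t : R) (u v : Complex.C) :
  s <> 0 -> 0 < s ^ 2 + 4 * t -> v <> RtoC 0 ->
  forall z : Complex.C,
    @ex_series C_AbsRing C_NormedModule
      (exp_term s t u (Cmult (Cmult v (RtoC (phi s t))) z)) ->
    @ex_series C_AbsRing C_NormedModule
      (exp_term s t u (Cmult (Cmult v (RtoC (phi' s t))) z)) ->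
    (z = RtoC 0 -> @ex_derive C_AbsRing C_NormedModule (fun w => exp_st s t w u) z) ->
    is_deformed_deriv s t v (fun w => exp_st s t w u) z
      (exp_st s t (Cmult (Cmult u v) z) u).
Proof.
  intros Hs H Hv z Ha Hb Hder.
  unfold is_deformed_deriv. unfold exp_st in *.
  destruct (Req_EM_T (fst u) 0) as [e1|n1]; destruct (Req_EM_T (snd u) 0) as [e2|n2];
    try (assert (Hu : u <> RtoC 0) by (intros E; subst u; simpl in *; lra);
         exact (main_nonzero s t u v z Hs H Hv Hu Ha Hb Hder)).
  destruct u as [u1 u2]. simpl in e1, e2. subst u1 u2.
  assert (Hd := RtoC_nz _ (Rgt_not_eq _ _ (phi_diff_pos s t H))).
  split.
  - intros Hz. rewrite RtoC_minus in Hd |- *. change (@pair R R 0 0) with (RtoC 0). field. repeat split; auto.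
  - intros Hz. subst z. split.
    + apply is_linear_scal_l.
    + intros x _ eps. apply filter_forall. intros y.
      change (Cmod (Cplus (Cplus (Cplus (RtoC 1) y) (Copp (Cplus (RtoC 1) x)))
                (Copp (Cmult (Cplus y (Copp x)) (Cplus (RtoC 1) (Cmult (Cmult (RtoC 0) v) (RtoC 0))))))
              <= eps * Cmod (Cplus y (Copp x))).
      rewrite aux_zero, Cmod_0. apply Rmult_le_pos; [left; apply cond_pos|apply Cmod_ge_0].
Qed.
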